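(* Assume $\mathsf{CH}$. There is a $\mathcal{Z}$-MAD family (a MAD family $\mathcal{A}$ with $\mathcal{I}(\mathcal{A})\not\le_K\mathcal{Z}$) that is not Shelah–Stepr\={a}ns for block sequences.
   Context: $\mathcal{Z}=\{A\subseteq\omega:\lim_n|A\cap 2^n|/2^n=0\}$. A MAD family is a maximal family of infinite subsets of $\omega$ with pairwise finite intersections; $\mathcal{I}(\mathcal{A})$ is the ideal generated by $\mathcal{A}$ and finite sets. $\mathcal{I}\le_K\mathcal{J}$ (ideals on $\omega$) means there is $f:\omega\to\omega$ with $f^{-1}(A)\in\mathcal{J}$ for all $A\in\mathcal{I}$. For an ideal $\mathcal{I}$, $(\mathcal{I}^{<\omega})^+$ is the set of $X\subseteq[\omega]^{<\omega}\setminus\{\emptyset\}$ such that every $A\in\mathcal{I}$ is disjoint from some $s\in X$. A block sequence is $\{s_n:n\in\omega\}$ of nonempty finite subsets of $\omega$ with $\max s_n<\min s_{n+1}$. $\mathcal{A}$ is Shelah–Stepr\={a}ns for block sequences if for every block sequence $\{s_n\}\in(\mathcal{I}(\mathcal{A})^{<\omega})^+$ there is an infinite $W\subseteq\omega$ with $\bigcup_{n\in W}s_n\in\mathcal{I}(\mathcal{A})$. *)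

(* Defs.v *)
From mathcomp Require Import all_boot.
Set Implicit Arguments. Unset Strict Implicit. Unset Printing Implicit Defensive.

Definition nset := nat -> Prop.
Definition nfamily := nset -> Prop.

Definition finite_nset (A : nset) : Prop := exists N, forall x, A x -> x < N.
Definition infinite_nset (A : nset) : Prop := ~ finite_nset A.

(* The Continuum Hypothesis: every subset of P(omega) is countable (possibly
   finite or empty) or injects P(omega) into itself, i.e. has size continuum. *)
Definition CH : Prop :=
  forall X : nfamily,
    (exists f : nat -> nset, forall A, X A -> exists n, f n = A) \/
    (exists g : nset -> nset, (forall B, X (g B)) /\ injective g).

(* The density zero ideal Z = {A : lim_n |A ∩ 2^n| / 2^n = 0}, where
   2^n = {0, ..., 2^n - 1}.  "|A ∩ 2^n| <= 2^n / k" is expressed by bounding the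
   size of every duplicate-free list of elements of A below 2^n. *)
Definition Zideal : nfamily := fun A =>
  forall k, 0 < k -> exists N, forall n, N <= n ->
    forall l : seq nat, uniq l -> (forall x, x \in l -> A x /\ x < 2 ^ n) ->
      k * size l <= 2 ^ n.

Definition AD (F : nfamily) : Prop :=
  (forall a, F a -> infinite_nset a) /\
  (forall a b, F a -> F b -> a <> b -> finite_nset (fun x => a x /\ b x)).

Definition MAD (F : nfamily) : Prop :=
  AD F /\ forall G : nfamily, AD G -> (forall a, F a -> G a) -> forall a, G a -> F a.

(* I(A): the ideal generated by A and the finite sets. *)
Definition ideal_gen (F : nfamily) : nfamily := fun X =>
  exists (k : nat) (a : 'I_k -> nset) (N : nat),
    (forall i, F (a i)) /\
    forall x, X x -> x < N \/ exists i, a i x.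

Definition katetov_le (I J : nfamily) : Prop :=
  exists f : nat -> nat, forall A, I A -> J (fun x => A (f x)).

Definition block_seq (s : nat -> seq nat) : Prop :=
  (forall n, s n <> [::]) /\
  (forall n x y, x \in s n -> y \in s n.+1 -> x < y).

(* {s_n : n in omega} belongs to (I^{<omega})^+ : every member of I is disjoint
   from some s_n. *)
Definition in_fin_pos (I : nfamily) (s : nat -> seq nat) : Prop :=
  forall A, I A -> exists n, forall x, x \in s n -> ~ A x.

Definition shelah_steprans_block (F : nfamily) : Prop :=
  forall s, block_seq s -> in_fin_pos (ideal_gen F) s ->
    exists W : nset, infinite_nset W /\
      ideal_gen F (fun x => exists2 n, W n & x \in s n).

Definition Z_MAD (F : nfamily) : Prop :=
  MAD F /\ ~ katetov_le (ideal_gen F) Zideal.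

(* Main.v *)
Require Import Defs.
From mathcomp Require Import all_boot.
From mathcomp Require Import boolp wochoice.
From mathcomp Require Import zify.
From Stdlib Require Import Init.Wf Wellfounded.Inverse_Image Classical.
Set Implicit Arguments. Unset Strict Implicit. Unset Printing Implicit Defensive.

Definition countable_set (S : nset -> Prop) :=
  exists h : nat -> nset, forall y, S y -> exists n, h n = y.

Lemma wo_facts (R0 : rel nset) : well_order R0 ->
  (forall x, R0 x x) /\ (forall x y, R0 x y \/ R0 y x) /\
  (forall x y, R0 x y -> R0 y x -> x = y) /\
  (forall x y z, R0 x y -> R0 y z -> R0 x z) /\
  (forall A : nset -> Prop, (exists x, A x) -> exists z, A z /\ forall x, A x -> R0 z x).
Proof.
move=> wo.
have minP : forall A : nset -> Prop, (exists x, A x) -> exists z, A z /\ forall x, A x -> R0 z x.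
  move=> A [x Ax].
  have ne : nonempty [pred z | `[< A z >]] by exists x; rewrite inE; apply/asboolP.
  have [z [[zA zlb] _]] := wo _ ne.
  exists z; split; first by move: zA; rewrite inE => /asboolP.
  by move=> y Ay; apply: zlb; rewrite inE; apply/asboolP.
have refl : forall x, R0 x x.
  by move=> x; have [z [-> h]] := minP (fun z => z = x) (ex_intro _ x erefl); apply: h.
have tot : forall x y, R0 x y \/ R0 y x.
  move=> x y; have [z [hz h]] := minP (fun z => z = x \/ z = y) (ex_intro _ x (or_introl erefl)).
  by case: hz => e; subst z; [left; apply: h; right | right; apply: h; left].
have anti : forall x y, R0 x y -> R0 y x -> x = y.
  move=> x y rxy ryx.
  have ne : nonempty [pred z | `[< z = x \/ z = y >]] by exists x; rewrite inE; apply/asboolP; left.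
  have [z [_ uz]] := wo _ ne.
  have mx : minimum_of R0 [pred z | `[< z = x \/ z = y >]] x.
    split; first by rewrite inE; apply/asboolP; left.
    by move=> w; rewrite inE => /asboolP [e|e]; subst w.
  have my : minimum_of R0 [pred z | `[< z = x \/ z = y >]] y.
    split; first by rewrite inE; apply/asboolP; right.
    by move=> w; rewrite inE => /asboolP [e|e]; subst w.
  by rewrite -(uz _ mx) (uz _ my).
split=> //; split=> //; split=> //; split=> //.
move=> x y z rxy ryz.
have [m [hm h]] := minP (fun w => w = x \/ w = y \/ w = z) (ex_intro _ x (or_introl erefl)).
case: hm => [e|[e|e]]; subst m.
- by apply: h; right; right.
- have -> : x = y by apply: anti => //; apply: h; left.
  done.
- have e : y = z by apply: anti => //; apply: h; right; left.
  by rewrite -e.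
Qed.

Lemma good_order (HCH : CH) : exists lt : nset -> nset -> Prop,
  well_founded lt /\ (forall x y z, lt x y -> lt y z -> lt x z) /\
  (forall x y, x <> y -> lt x y \/ lt y x) /\ (forall x, ~ lt x x) /\
  (forall x, countable_set (fun y => lt y x)).
Proof.
have [R0 wo] := well_ordering_principle nset.
have [refl [tot [anti [trans minP]]]] := wo_facts wo.
pose lt0 x y := R0 x y /\ x <> y.
have wf0 : well_founded lt0.
  move=> x; apply: NNPP => nacc.
  have [m [hm mmin]] := minP (fun w => ~ Acc lt0 w) (ex_intro _ x nacc).
  apply: hm; constructor => w [rwm neq]; apply: NNPP => nw.
  by apply: neq; apply: anti => //; apply: mmin.
have [g [ginj gcnt]] : exists g : nset -> nset, injective g /\
    forall y, countable_set (fun w => lt0 w (g y)).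
  case: (pselect (exists z, ~ countable_set (fun w => lt0 w z))) => [hex|hno].
  - have [z0 [hz0 z0min]] := minP _ hex.
    case: (HCH (fun w => lt0 w z0)) => [hc|[g [gY ginj]]]; first by case: hz0.
    exists g; split => // y; apply: NNPP => nc.
    have r := z0min _ nc.
    have [r' neq] := gY y.
    by apply: neq; apply: anti.
  - exists id; split => // y; apply: NNPP => nc; apply: hno; by exists y.
exists (fun x y => lt0 (g x) (g y)); split.
  exact: (wf_inverse_image _ _ lt0 g wf0).
split.
  move=> x y z [r1 n1] [r2 n2]; split; first exact: trans r2.
  by move=> e; rewrite e in r1; apply: n2; apply: anti.
split.
  move=> x y nxy; have ng : g x <> g y by move=> e; apply: nxy; apply: ginj.
  case: (tot (g x) (g y)) => r; [left | right]; split => //; by move=> e; apply: ng.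
split; first by move=> x [_ n].
move=> x; have [h hh] := gcnt x.
exists (fun n => match pselect (exists y, g y = h n) with
                 | left e => proj1_sig (cid e) | right _ => x end).
move=> y ly; have [n hn] := hh _ ly; exists n.
case: pselect => [e|ne]; last by case: ne; exists y.
case: (cid e) => y' /= e'; apply: ginj; by rewrite e' hn.
Qed.

Definition blk (n : nat) : seq nat := iota (n * n) (n.*2).+1.

Lemma mem_blk x n : (x \in blk n) = (n * n <= x < n * n + n.*2.+1).
Proof. by rewrite /blk mem_iota. Qed.

Lemma blk_lt x y n n' : x \in blk n -> y \in blk n' -> n < n' -> x < y.
Proof. rewrite !mem_blk => /andP[h1 h2] /andP[h3 h4] h; nia. Qed.

Lemma blk_uniq x n n' : x \in blk n -> x \in blk n' -> n = n'.
Proof.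
move=> h1 h2; case: (ltngtP n n') => // h.
- by have := blk_lt h1 h2 h; rewrite ltnn.
- by have := blk_lt h2 h1 h; rewrite ltnn.
Qed.

Lemma blk_ex x : exists n, x \in blk n.
Proof.
elim: x => [|x [n hn]]; first by exists 0.
move: hn; rewrite mem_blk => /andP[h1 h2].
case: (ltnP x.+1 (n * n + n.*2.+1)) => h.
- by exists n; rewrite mem_blk; apply/andP; split; lia.
- exists n.+1; rewrite mem_blk; apply/andP; split; nia.
Qed.

Lemma blk_range x n L R : x \in blk n -> L * L <= x -> x < R * R -> L <= n < R.
Proof. rewrite mem_blk => /andP[h1 h2] h3 h4; apply/andP; split; nia. Qed.

Lemma blk_ge x n : x \in blk n -> n <= x.
Proof. rewrite mem_blk => /andP[h1 h2]; nia. Qed.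

Lemma blk_block : block_seq blk.
Proof.
split; first by move=> n; rewrite /blk.
move=> n x y hx hy; apply: (blk_lt hx hy); lia.
Qed.

Definition P (U : nset) : Prop :=
  (forall N, exists n, N <= n /\ forall x, x \in blk n -> ~ U x) /\
  (forall r, exists N, forall n, N <= n -> exists t : seq nat,
      [/\ uniq t, r <= size t & forall x, x \in t -> x \in blk n /\ ~ U x]).

Definition Inv (B : nfamily) := forall U, ideal_gen B U -> P U.

Lemma P_anti U V : (forall x, V x -> U x) -> P U -> P V.
Proof.
move=> sub [h1 h2]; split.
  move=> N; have [n [hn h]] := h1 N; exists n; split => // x hx Vx.
  by apply: (h x hx); apply: sub.
move=> r; have [N hN] := h2 r; exists N => n hn.
have [t [u s ht]] := hN n hn; exists t; split => // x hx.
have [a b] := ht x hx; split => // Vx; apply: b; exact: sub.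
Qed.

Lemma P_fin U M : P U -> P (fun x => x < M \/ U x).
Proof.
move=> [h1 h2]; split.
  move=> N; have [n [hn h]] := h1 (maxn N M); exists n; split; first lia.
  move=> x hx [xM|Ux]; last exact: (h x hx).
  have := blk_ge hx; lia.
move=> r; have [N hN] := h2 r; exists (maxn N M) => n hn.
have [t [u s ht]] := hN n (leq_trans (leq_maxl _ _) hn); exists t; split => // x hx.
have [a b] := ht x hx; split => // -[xM|Ux]; last exact: b.
have := blk_ge a; lia.
Qed.

Lemma P_empty : P (fun _ => False).
Proof.
split; first by move=> N; exists N; split => // x _ [].
move=> r; exists r => n hn; exists (blk n); split => //.
- exact: iota_uniq.
- rewrite size_iota; lia.
- by move=> x hx; split.
Qed.

Lemma IG_sub B U V : ideal_gen B U -> (forall x, V x -> U x) -> ideal_gen B V.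
Proof.
move=> [k [a [N [h1 h2]]]] sub; exists k, a, N; split => // x Vx; exact: h2 (sub x Vx).
Qed.

Lemma IG_fin B M : ideal_gen B (fun x => x < M).
Proof.
exists 0, (fun i : 'I_0 => fun _ => False), M; split; first by case.
by move=> x h; left.
Qed.

Lemma IG_mem B a : B a -> ideal_gen B a.
Proof.
move=> Ba; exists 1, (fun _ => a), 0; split => // x ax; right; by exists ord0.
Qed.

Lemma IG_union B U V : ideal_gen B U -> ideal_gen B V ->
  ideal_gen B (fun x => U x \/ V x).
Proof.
move=> [k1 [a1 [N1 [h1 h1']]]] [k2 [a2 [N2 [h2 h2']]]].
exists (k1 + k2), (fun i => match split i with inl j => a1 j | inr j => a2 j end), (maxn N1 N2).
split.
  by move=> i; case: (split i).
move=> x [Ux|Vx].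
- case: (h1' x Ux) => [xl|[j hj]]; first by left; lia.
  right; exists (unsplit (inl j)); by rewrite unsplitK.
- case: (h2' x Vx) => [xl|[j hj]]; first by left; lia.
  right; exists (unsplit (inr j)); by rewrite unsplitK.
Qed.

Lemma IG_mono B B' U : (forall b, B b -> B' b) -> ideal_gen B U -> ideal_gen B' U.
Proof.
move=> sub [k [a [N [h1 h2]]]]; exists k, a, N; split => // i; exact: sub.
Qed.

Lemma fin_max (T : Type) (le : T -> T -> Prop)
  (tot : forall a b, le a b \/ le b a) (tr : forall a b c, le a b -> le b c -> le a c)
  (k : nat) (Q : 'I_k -> T -> Prop) :
  (forall i, exists y, Q i y) ->
  k = 0 \/ exists z, (exists i, Q i z) /\ forall i, exists y, Q i y /\ le y z.
Proof.
elim: k Q => [|k IH] Q hQ; first by left.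
right.
have [ym hym] := hQ ord_max.
have refl : forall a, le a a by move=> a; case: (tot a a).
have split_i : forall i : 'I_k.+1, i = ord_max \/ exists i' : 'I_k, i = widen_ord (leqnSn k) i'.
  move=> i; case: (ltnP i k) => h.
  - right; exists (Ordinal h); exact: val_inj.
  - left; apply: val_inj => /=; have := ltn_ord i; lia.
case: (IH (fun i => Q (widen_ord (leqnSn k) i)) (fun i => hQ _)) => [k0|[z [[i0 hz] hall]]].
- exists ym; split; first by exists ord_max.
  move=> i; case: (split_i i) => [->|[i' _]]; first by exists ym.
  by subst k; case: i'.
- case: (tot z ym) => hle.
  + exists ym; split; first by exists ord_max.
    move=> i; case: (split_i i) => [->|[i' ->]]; first by exists ym.
    have [y [hy le1]] := hall i'; exists y; split => //; exact: tr le1 hle.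
  + exists z; split; first by exists (widen_ord (leqnSn k) i0).
    move=> i; case: (split_i i) => [->|[i' ->]]; first by exists ym.
    exact: hall.
Qed.

Definition cup (h : nat -> nset) (m : nat) : nset := fun x => exists2 i, i <= m & h i x.

Lemma cup_mono h m m' x : m <= m' -> cup h m x -> cup h m' x.
Proof. move=> hm [i hi hx]; exists i => //; exact: leq_trans hm. Qed.

Lemma cover1 (B : nfamily) h (a : nset) :
  (forall b, B b -> (forall x, b x -> a x) \/ exists i, h i = b) ->
  forall U, ideal_gen B U -> exists m N, forall x, U x -> x < N \/ a x \/ cup h m x.
Proof.
move=> hB U [k [ai [N [hai hU]]]].
have hQ : forall i, exists j, forall x, ai i x -> a x \/ cup h j x.
  move=> i; case: (hB _ (hai i)) => [s|[j hj]].
  - by exists 0 => x /s; left.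
  - exists j => x hx; right; exists j => //; by rewrite hj.
case: (fin_max (le := leq) (fun a b => orP (leq_total a b)) (fun a b c => @leq_trans b a c) hQ)
  => [k0|[z [_ hz]]].
- exists 0, N => x /hU [|[i _]]; first by left.
  by subst k; case: i.
- exists z, N => x /hU [|[i hi]]; first by left.
  have [y [hy le]] := hz i; case: (hy x hi) => [ax|cx]; first by right; left.
  by right; right; exact: cup_mono le cx.
Qed.

Lemma cup_IG (B : nfamily) h : (forall i, B (h i) \/ forall x, ~ h i x) ->
  forall m, ideal_gen B (cup h m).
Proof.
move=> hh; have hi : forall i, ideal_gen B (h i).
  move=> i; case: (hh i) => [/IG_mem //|e].
  by apply: (IG_sub (IG_fin B 0)) => x /e.
elim=> [|m IH].
  by apply: (IG_sub (hi 0)) => x [i]; rewrite leqn0 => /eqP ->.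
apply: (IG_sub (IG_union IH (hi m.+1))) => x [i him hx].
case: (ltnP i m.+1) => h1; first by left; exists i.
by right; have -> : m.+1 = i by lia.
Qed.

Definition Spec (c : nat -> nset) (Q : nat -> nset -> Prop) (m lb : nat) (t : nat * nat * nset) :=
  let: (L, R, p) := t in
  [/\ lb <= L, L <= R,
     (forall x, p x -> L * L <= x < R * R /\ ~ c m x),
     (forall n, L <= n < R -> exists t, [/\ uniq t, m <= size t &
          forall x, x \in t -> [/\ x \in blk n, ~ c m x & ~ p x]]) &
     Q m p].

Lemma gen_pieces (c : nat -> nset) (Q : nat -> nset -> Prop) :
  (forall m m' x, m <= m' -> c m x -> c m' x) ->
  (forall m, P (c m)) ->
  (forall m lb, exists t, Spec c Q m lb t) ->
  exists a : nset, [/\ (forall j, finite_nset (fun x => a x /\ c j x)),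
     (forall j, P (fun x => a x \/ c j x)),
     (forall m, exists p, Q m p /\ forall x, p x -> a x) &
     (forall x, a x -> exists m p, Q m p /\ p x)].
Proof.
move=> cmono Pc hst.
pose sf m lb := proj1_sig (cid (hst m lb)).
have sfP : forall m lb, Spec c Q m lb (sf m lb) := fun m lb => proj2_sig (cid (hst m lb)).
have hE : forall m N, exists n, N <= n /\ forall x, x \in blk n -> ~ c m x.
  by move=> m N; case: (Pc m) => h _; exact: h.
pose ef m N := proj1_sig (cid (hE m N)).
have efP : forall m N, N <= ef m N /\ forall x, x \in blk (ef m N) -> ~ c m x :=
  fun m N => proj2_sig (cid (hE m N)).
pose lbs := fix lbs m := match m with 0 => 0 | m'.+1 => (ef m' (sf m' (lbs m')).1.2).+1 end.
pose L m := (sf m (lbs m)).1.1.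
pose R m := (sf m (lbs m)).1.2.
pose p m := (sf m (lbs m)).2.
pose e m := ef m (R m).
have spec : forall m, [/\ lbs m <= L m, L m <= R m,
     (forall x, p m x -> L m * L m <= x < R m * R m /\ ~ c m x),
     (forall n, L m <= n < R m -> exists t, [/\ uniq t, m <= size t &
          forall x, x \in t -> [/\ x \in blk n, ~ c m x & ~ p m x]]) &
     Q m (p m)].
  move=> m; have := sfP m (lbs m); rewrite /L /R /p.
  by case: (sf m (lbs m)) => [[l r] q].
have eR : forall m, R m <= e m by move=> m; case: (efP m (R m)).
have eE : forall m x, x \in blk (e m) -> ~ c m x by move=> m; case: (efP m (R m)).
have lbsS : forall m, lbs m.+1 = (e m).+1 by [].
have eL : forall m m', m < m' -> e m < L m'.
  move=> m m'; elim: m' => [//|m' IH] h.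
  have [h1 h2 _ _ _] := spec m'.+1; rewrite lbsS in h1.
  case: (ltngtP m m') => hm.
  - have [_ h3 _ _ _] := spec m'. have := IH hm. have := eR m'. lia.
  - lia.
  - subst m'; lia.
have RL : forall m m', m < m' -> R m < L m'.
  by move=> m m' h; have := eL _ _ h; have := eR m; lia.
have Lge : forall m, m <= L m.
  elim=> [|m IH]; first by [].
  have := eL m m.+1 (ltnSn m); have [_ h _ _ _] := spec m; have := eR m; lia.
have rng : forall m x n, p m x -> x \in blk n -> L m <= n < R m.
  move=> m x n px hx; have [_ _ h _ _] := spec m; have [h1 _] := h x px.
  by apply: (blk_range hx); lia.
have disj : forall m m' n, L m <= n < R m -> L m' <= n < R m' -> m = m'.
  move=> m m' n h1 h2; case: (ltngtP m m') => // hm.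
  - have := RL _ _ hm; lia.
  - have := RL _ _ hm; lia.
exists (fun x => exists m, p m x); split.
- move=> j; exists (L j * L j) => x [[m pm] cj].
  have [_ _ h _ _] := spec m; have [h1 h2] := h x pm.
  case: (ltnP m j) => hmj.
  + have := RL _ _ hmj; nia.
  + by case: h2; apply: cmono cj.
- move=> j; split.
  + move=> N; exists (e (maxn N j)); split.
      have := eR (maxn N j); have [_ h _ _ _] := spec (maxn N j); have := Lge (maxn N j); lia.
    move=> x hx [[m' pm']|cj].
    * have := rng _ _ _ pm' hx => hr.
      case: (ltngtP m' (maxn N j)) => hm.
      -- have := RL _ _ hm; have := eR (maxn N j); have [_ h _ _ _] := spec (maxn N j); lia.
      -- have := eL _ _ hm; lia.
      -- subst m'; have := eR (maxn N j); lia.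
    * by apply: (eE _ _ hx); apply: cmono cj; apply: leq_maxr.
  + move=> r; have [N1 hN1] := (proj2 (Pc j)) r.
    exists (maxn (L (maxn r j)) N1) => n hn.
    case: (pselect (exists m, L m <= n < R m)) => [[m hm]|hno].
    * have hmM : maxn r j <= m.
        case: (ltnP m (maxn r j)) => // hlt; have := RL _ _ hlt; lia.
      have [_ _ _ h4 _] := spec m; have [t [ut st ht]] := h4 n hm.
      exists t; split => //; first by apply: leq_trans _ st; apply: leq_trans (leq_maxl r j) hmM.
      move=> x hx; have [b1 b2 b3] := ht x hx; split => // -[[m' pm']|cj].
      -- have := disj _ _ _ hm (rng _ _ _ pm' b1) => em; subst m'; exact: b3.
      -- by apply: b2; apply: cmono cj; lia.
    * have [t [ut st ht]] := hN1 n (leq_trans (leq_maxr _ _) hn).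
      exists t; split => // x hx; have [b1 b2] := ht x hx; split => // -[[m' pm']|cj] //.
      by apply: hno; exists m'; exact: rng _ _ _ pm' b1.
- move=> m; exists (p m); split; first by case: (spec m).
  by move=> x px; exists m.
- move=> x [m pm]; exists m, (p m); split => //; by case: (spec m).
Qed.
Definition S (c : nset) (n : nat) : seq nat := filter (fun y => ~~ `[< c y >]) (blk n).
Definition sel (b : bool) (k : nat) (s : seq nat) := if b then take k s else drop k s.
Definition pc (c : nset) (L R : nat) (b : bool) : nset :=
  fun y => exists2 n, L <= n < R & y \in sel b (size (S c n) %/ 2) (S c n).

Lemma S_uniq c n : uniq (S c n).
Proof. by apply: filter_uniq; apply: iota_uniq. Qed.

Lemma mem_S c n y : (y \in S c n) -> y \in blk n /\ ~ c y.
Proof. by rewrite mem_filter => /andP[/asboolPn h1 h2]. Qed.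

Lemma mem_S' c n y : y \in blk n -> ~ c y -> y \in S c n.
Proof. by move=> h1 h2; rewrite mem_filter h1 andbT; apply/asboolPn. Qed.

Lemma sel_sub b k s y : y \in sel b k s -> y \in s.
Proof. by case: b => /=; [apply: mem_take | apply: mem_drop]. Qed.

Lemma sel_uniq b k s : uniq s -> uniq (sel b k s).
Proof. by case: b => /= h; [apply: take_uniq | apply: drop_uniq]. Qed.

Lemma sel_disj b k s y : uniq s -> y \in sel b k s -> y \in sel (~~ b) k s -> False.
Proof.
move=> u; have : uniq (take k s ++ drop k s) by rewrite cat_take_drop.
rewrite cat_uniq => /and3P[_ /hasPn hn _].
case: b => /= h1 h2.
- by have := hn y h2; rewrite h1.
- by have := hn y h1; rewrite h2.
Qed.

Lemma sel_cover k s y : y \in s -> y \in sel true k s \/ y \in sel false k s.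
Proof.
by rewrite -{1}(cat_take_drop k s) mem_cat => /orP[h|h]; [left|right].
Qed.

Lemma sel_size b s m : m.*2 <= size s -> m <= size (sel b (size s %/ 2) s).
Proof.
move=> h; case: b => /=; [rewrite size_take | rewrite size_drop].
- case: ltnP => _; lia.
- lia.
Qed.

Lemma pc_prop c L R m (b : bool) :
  (forall n, L <= n < R -> m.*2 <= size (S c n)) ->
  (forall x, pc c L R b x -> L * L <= x < R * R /\ ~ c x) /\
  (forall n, L <= n < R -> exists t, [/\ uniq t, m <= size t &
     forall x, x \in t -> [/\ x \in blk n, ~ c x & ~ pc c L R b x]]).
Proof.
move=> hS; split.
  move=> x [n hn /sel_sub /mem_S [hb hc]]; split => //.
  move: hb; rewrite mem_blk => /andP[h1 h2]; apply/andP; split; nia.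
move=> n hn; exists (sel (~~ b) (size (S c n) %/ 2) (S c n)); split.
- exact/sel_uniq/S_uniq.
- exact/sel_size/hS.
- move=> x hx; have [hb hc] := mem_S (sel_sub hx); split => // -[n' hn' hx'].
  have [hb' _] := mem_S (sel_sub hx').
  have e := blk_uniq hb hb'; subst n'.
  exact: (sel_disj (S_uniq c n) hx' hx).
Qed.

Lemma pc_cover c L R y : L * L <= y -> y < R -> ~ c y -> pc c L R true y \/ pc c L R false y.
Proof.
move=> h1 h2 hc; have [n hn] := blk_ex y.
have hr : L <= n < R by apply: (blk_range hn) => //; nia.
case: (sel_cover (size (S c n) %/ 2) (mem_S' hn hc)) => h; [left|right]; by exists n.
Qed.

Lemma count_le3 (s : seq nat) (P1 P2 P3 : pred nat) :
  (forall i, i \in s -> P1 i -> P2 i || P3 i) -> count P1 s <= count P2 s + count P3 s.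
Proof.
elim: s => [//|x s IH] h /=.
have IH' := IH (fun i hi => h i (mem_behead (s := x :: s) hi)).
have hx : (P1 x : nat) <= P2 x + P3 x.
  move: (h x (mem_head _ _)); case: (P1 x) => //; case: (P2 x); case: (P3 x) => //.
  by move/(_ isT).
lia.
Qed.

Lemma le_foldmax (f : nat -> nat) s i : i \in s -> f i <= foldr maxn 0 (map f s).
Proof.
elim: s => [//|x s IH]; rewrite inE => /orP[/eqP->|h] /=; first exact: leq_maxl.
exact: leq_trans (IH h) (leq_maxr _ _).
Qed.

Lemma Zideal_sub A A' : Zideal A -> (forall x, A' x -> A x) -> Zideal A'.
Proof.
move=> hZ sub k hk; have [N hN] := hZ k hk; exists N => n hn l u hl.
apply: hN => // x hx; have [a b] := hl x hx; split => //; exact: sub.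
Qed.

Lemma P_cup B h : (forall i, B (h i) \/ forall x, ~ h i x) -> Inv B -> forall m, P (cup h m).
Proof. by move=> hh inv m; apply: inv; apply: cup_IG. Qed.

Lemma extend_inv (B : nfamily) h (a : nset) :
  (forall i, B (h i) \/ forall x, ~ h i x) ->
  (forall b, B b -> exists i, h i = b) ->
  (forall j, finite_nset (fun x => a x /\ cup h j x)) ->
  (forall j, P (fun x => a x \/ cup h j x)) ->
  (forall b, B b -> finite_nset (fun x => a x /\ b x)) /\ Inv (fun b => B b \/ b = a).
Proof.
move=> hh1 hh2 hfin hP; split.
  move=> b /hh2 [i hi]; have [N hN] := hfin i; exists N => x [ax bx].
  apply: hN; split => //; exists i => //; by rewrite hi.
move=> U hU.
have hB : forall b, B b \/ b = a -> (forall x, b x -> a x) \/ exists i, h i = b.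
  by move=> b [/hh2 hb|->]; [right|left].
have [m [N hN]] := cover1 hB hU.
apply: (P_anti (U := fun x => x < N \/ (a x \/ cup h m x))); first by move=> x /hN.
exact/P_fin/hP.
Qed.

Lemma size_filter_neq (t : seq nat) x : uniq t -> size t <= (size (filter (fun y => y != x) t)).+1.
Proof.
suff H : uniq t -> size t <= size (filter (fun y => y != x) t) + (x \in t).
  by move=> u; have := H u; case: (x \in t) => /=; lia.
elim: t => [//|y t IH] /= /andP[ny u]; have := IH u.
rewrite inE; case: (eqVneq y x) => [e|ne] /=.
- subst y; rewrite (negbTE ny) /=; lia.
- lia.
Qed.

Lemma X_step (B : nfamily) (h : nat -> nset) (X : nset) :
  (forall i, B (h i) \/ forall x, ~ h i x) ->
  (forall b, B b -> exists i, h i = b) ->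
  Inv B -> infinite_nset X ->
  (forall b, B b -> finite_nset (fun x => X x /\ b x)) ->
  exists a : nset, [/\ infinite_nset a, (forall b, B b -> finite_nset (fun x => a x /\ b x)),
     Inv (fun b => B b \/ b = a) & forall x, a x -> X x].
Proof.
move=> hh1 hh2 inv hX hXB.
have Pc := P_cup hh1 inv.
have finXc : forall m, finite_nset (fun x => X x /\ cup h m x).
  elim=> [|m [N hN]].
  - case: (hh1 0) => [/hXB [N hN]|e].
    + exists N => x [Xx [i hi hx]]; move: hi; rewrite leqn0 => /eqP ei; subst i.
      by apply: hN.
    + exists 0 => x [Xx [i hi hx]]; move: hi; rewrite leqn0 => /eqP ei; subst i.
      by case: (e x).
  - have [N' hN'] : finite_nset (fun x => X x /\ h m.+1 x).
      case: (hh1 m.+1) => [/hXB //|e]; by exists 0 => x [_ /e].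
    exists (maxn N N') => x [Xx [i hi hx]].
    case: (ltnP i m.+1) => hi'.
    + have := hN x (conj Xx (ex_intro2 _ _ i hi' hx)); lia.
    + have ei : i = m.+1 by lia.
      subst i; have := hN' x (conj Xx hx); lia.
have unb : forall m M, exists x, [/\ M <= x, X x & ~ cup h m x].
  move=> m M; apply: NNPP => hno; apply: hX; have [N hN] := finXc m.
  exists (maxn M N) => x Xx; case: (ltnP x M) => hxM; first lia.
  case: (pselect (cup h m x)) => hc; first by have := hN x (conj Xx hc); lia.
  by case: hno; exists x.
pose Q := fun (m : nat) (p : nset) => (forall x, p x -> X x) /\ exists x, p x /\ m <= x.
have hst : forall m lb, exists t, Spec (cup h) Q m lb t.
  move=> m lb; have [N1 hN1] := (proj2 (Pc m)) m.+1.
  pose L := maxn lb N1.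
  have [x [hxL Xx cx]] := unb m (maxn (L * L) m).
  have [n hn] := blk_ex x.
  have hn' := hn; rewrite mem_blk in hn'; move/andP: hn' => [hn1 hn2].
  exists (L, n.+1, fun y => y = x); rewrite /Spec; split.
  - exact: leq_maxl.
  - nia.
  - move=> y ->; split => //; apply/andP; split; nia.
  - move=> n' hn''; have [t [ut st ht]] := hN1 n' (leq_trans (leq_maxr _ _) (proj1 (andP hn''))).
    exists (filter (fun y => y != x) t); split.
    + exact: filter_uniq.
    + have := size_filter_neq x ut; lia.
    + move=> y; rewrite mem_filter => /andP[/eqP ne yt]; have [b1 b2] := ht y yt; by split.
  - split; first by move=> y ->.
    exists x; split => //; lia.
have [a [afin aP aQ aQ']] := gen_pieces (fun m m' x => @cup_mono h m m' x) Pc hst.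
have [ad inv'] := extend_inv hh1 hh2 afin aP.
exists a; split => //.
- move=> [N hN]; have [p [[_ [x [px hx]]] pa]] := aQ N.
  have := hN x (pa x px); lia.
- move=> x /aQ' [m [p [[hp _] px]]]; exact: hp.
Qed.

Lemma f_step (B : nfamily) (h : nat -> nset) (f : nat -> nat) :
  (forall i, B (h i) \/ forall x, ~ h i x) ->
  (forall b, B b -> exists i, h i = b) ->
  Inv B -> (forall A, ideal_gen B A -> Zideal (fun i => A (f i))) ->
  exists a : nset, [/\ infinite_nset a, (forall b, B b -> finite_nset (fun x => a x /\ b x)),
     Inv (fun b => B b \/ b = a) & ~ Zideal (fun i => a (f i))].
Proof.
move=> hh1 hh2 inv rel.
have Pc := P_cup hh1 inv.
pose Q := fun (m : nat) (p : nset) => exists N, m <= N /\ exists l : seq nat,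
  [/\ uniq l, (forall i, i \in l -> p (f i) /\ i < 2 ^ N) & 2 ^ N < 3 * size l].
have hst : forall m lb, exists t, Spec (cup h) Q m lb t.
  move=> m lb; have [N1 hN1] := (proj2 (Pc m)) (m.*2).
  pose L := maxn lb N1.
  pose D := fun x => x < L * L \/ cup h m x.
  have hZ : Zideal (fun i => D (f i)).
    by apply: rel; apply: IG_union; [apply: IG_fin | apply: cup_IG].
  have [N2 hN2] := hZ 8 isT.
  pose N := maxn N2 m.
  pose R := maxn L (foldr maxn 0 (map f (iota 0 (2 ^ N)))).+1.
  have hS : forall n, L <= n < R -> m.*2 <= size (S (cup h m) n).
    move=> n /andP[hn1 hn2]; have [t [ut st ht]] := hN1 n (leq_trans (leq_maxr _ _) hn1).
    apply: leq_trans st _; apply: uniq_leq_size => // x /ht [b1 b2]; exact: mem_S'.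
  pose D' := fun i => `[< D (f i) >].
  have cD : 8 * count D' (iota 0 (2 ^ N)) <= 2 ^ N.
    rewrite -size_filter; apply: hN2; first exact: leq_maxl.
    + exact/filter_uniq/iota_uniq.
    + move=> i; rewrite mem_filter mem_iota => /andP[/asboolP hD /andP[_ hi]]; split => //.
  pose cnt b := count (fun i => `[< pc (cup h m) L R b (f i) >]) (iota 0 (2 ^ N)).
  have cov : count (predC D') (iota 0 (2 ^ N)) <= cnt true + cnt false.
    apply: count_le3 => i hin /= /asboolPn hD.
    have hfi : f i < R.
      have hle := le_foldmax f hin.
      rewrite /R; lia.
    have hL : L * L <= f i by case: (ltnP (f i) (L * L)) => // hlt; case: hD; left.
    have hc : ~ cup h m (f i) by move=> hc; apply: hD; right.
    by case: (pc_cover hL hfi hc) => hp; apply/orP; [left|right]; apply/asboolP.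
  have tot := count_predC D' (iota 0 (2 ^ N)); rewrite size_iota in tot.
  have pos : 0 < 2 ^ N by rewrite expn_gt0.
  pose b := cnt false <= cnt true.
  have big : 2 ^ N < 3 * cnt b.
    rewrite /b; case: (leqP (cnt false) (cnt true)) => hb /=; lia.
  exists (L, R, pc (cup h m) L R b); rewrite /Spec.
  have [H1 H2] := pc_prop b hS.
  split => //.
  - exact: leq_maxl.
  - exact: leq_maxl.
  - exists N; split; first exact: leq_maxr.
    exists (filter (fun i => `[< pc (cup h m) L R b (f i) >]) (iota 0 (2 ^ N))); split.
    + exact/filter_uniq/iota_uniq.
    + move=> i; rewrite mem_filter mem_iota => /andP[/asboolP hp /andP[_ hi]]; split => //.
    + by rewrite size_filter.
have [a [afin aP aQ aQ']] := gen_pieces (fun m m' x => @cup_mono h m m' x) Pc hst.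
have [ad inv'] := extend_inv hh1 hh2 afin aP.
have nZ : ~ Zideal (fun i => a (f i)).
  move=> hZa; have [N0 hN0] := hZa 3 isT.
  have [p [[N [hN [l [ul hl big]]]] pa]] := aQ N0.
  have := hN0 N hN l ul (fun i hi => let: conj h1 h2 := hl i hi in conj (pa _ h1) h2); lia.
exists a; split => //.
move=> [M hM]; apply: nZ; apply: (Zideal_sub (rel _ (IG_fin B M))) => i ai; exact: hM.
Qed.

Definition enc (b : Prop) (X : nset) : nset :=
  fun k => match k with 0 => b | k'.+1 => X k' end.
Definition tl (x : nset) : nset := fun n => x n.+1.
Definition pairn (n m : nat) : nat := pickle (n, m).
Definition decode (X : nset) : nat -> nat := fun n =>
  match pselect (exists m, X (pairn n m)) with
  | left e => proj1_sig (cid e) | right _ => 0 end.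
Definition graph (f : nat -> nat) : nset := fun k => exists n, k = pairn n (f n).

Lemma decode_graph f : decode (graph f) = f.
Proof.
apply: funext => n; rewrite /decode; case: pselect => [e|ne].
- case: (cid e) => m [n' /= hm].
  have := pcan_inj (@pickleK (nat * nat)%type) hm; case=> -> ->; done.
- by case: ne; exists (f n); exists n.
Qed.

Definition ADto (B : nfamily) (a : nset) := forall b, B b -> finite_nset (fun x => a x /\ b x).

Definition Good (B : nfamily) (x : nset) (a : nset) : Prop :=
  [/\ infinite_nset a, ADto B a, Inv (fun b => B b \/ b = a) &
      (if pselect (x 0) then ~ Zideal (fun i => a (decode (tl x) i))
       else forall y, a y -> tl x y)].

Definition chooseo (Pr : nset -> Prop) : option nset :=
  match pselect (exists a, Pr a) with left e => Some (proj1_sig (cid e)) | right _ => None end.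

Lemma chooseo_some Pr a : chooseo Pr = Some a -> Pr a.
Proof.
rewrite /chooseo; case: pselect => [e|//]; case: (cid e) => a' ha' /= [<-] //.
Qed.

Lemma chooseo_ex Pr : (exists a, Pr a) -> exists a, chooseo Pr = Some a.
Proof. rewrite /chooseo => e; case: pselect => [e'|//]; by eexists. Qed.

Lemma ifT (Q : Prop) (A C : Prop) : Q -> (if pselect Q then A else C) = A.
Proof. by move=> q; case: pselect. Qed.
Lemma ifF (Q : Prop) (A C : Prop) : ~ Q -> (if pselect Q then A else C) = C.
Proof. by move=> q; case: pselect. Qed.

Lemma construction (lt : nset -> nset -> Prop) (wf : well_founded lt)
  (trans : forall x y z, lt x y -> lt y z -> lt x z)
  (tot : forall x y, x <> y -> lt x y \/ lt y x) (irr : forall x, ~ lt x x)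
  (cnt : forall x, countable_set (fun y => lt y x)) :
  exists F, Z_MAD F /\ ~ shelah_steprans_block F.
Proof.
pose stepB (x : nset) (B : nfamily) := chooseo (Good B x).
pose step (x : nset) (prev : forall y, lt y x -> option nset) :=
  stepB x (fun a => exists y (p : lt y x), prev y p = Some a).
pose out := Fix wf (fun _ => option nset) step.
pose Bx x := fun a => exists y, lt y x /\ out y = Some a.
have outE : forall x, out x = stepB x (Bx x).
  move=> x; rewrite /out Fix_eq.
  - rewrite /step; congr (stepB x _); apply: funext => a; apply: propext.
    by split => [[y [p e]]|[y [p e]]]; exists y; [split|exists p].
  - move=> x' f g hfg; rewrite /step; congr (stepB x' _); apply: funext => a; apply: propext.
    by split => [[y [p e]]|[y [p e]]]; exists y, p; rewrite ?hfg // -hfg.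
have outG : forall x a, out x = Some a -> Good (Bx x) x a.
  by move=> x a; rewrite outE => /chooseo_some.
have outEx : forall x, (exists a, Good (Bx x) x a) -> exists a, out x = Some a /\ Good (Bx x) x a.
  move=> x /chooseo_ex [a ha]; exists a; split; first by rewrite outE.
  by apply: outG; rewrite outE.
pose Cx x := fun a => Bx x a \/ out x = Some a.
have union_inv : forall S : nset -> Prop, (forall y, S y -> Inv (Cx y)) ->
    Inv (fun a => exists y, S y /\ out y = Some a).
  move=> S hS U [k [ai [N [hai hU]]]].
  pose le y z := lt y z \/ y = z.
  have letot : forall y z, le y z \/ le z y.
    move=> y z; case: (pselect (y = z)) => [->|ne]; first by left; right.
    by case: (tot _ _ ne) => h; [left; left | right; left].
  have letr : forall y z w, le y z -> le z w -> le y w.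
    move=> y z w [h1|->] [h2|<-]; rewrite /le; auto; left; exact: trans h1 h2.
  case: (fin_max letot letr (Q := fun i y => S y /\ out y = Some (ai i)) hai) => [k0|[z [[i0 [Sz _]] hz]]].
  - apply: (P_anti (U := fun x => x < N \/ False)); last exact/P_fin/P_empty.
    move=> x /hU [|[i _]]; first by left.
    by subst k; case: i.
  - apply: (hS z Sz); exists k, ai, N; split => // i.
    have [y [[_ hy] [hlt|e]]] := hz i; first by left; exists y.
    by subst y; right.
have invC : forall x, Inv (Cx x).
  apply: (well_founded_ind wf) => x IH.
  have iB : Inv (Bx x) by apply: union_inv.
  case e : (out x) => [a|].
  - have [_ _ hinv _] := outG x a e.
    move=> U hU; apply: hinv; apply: (IG_mono _ hU) => b [hb|hb]; first by left.
    by right; move: hb; rewrite e => -[->].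
  - move=> U hU; apply: iB; apply: (IG_mono _ hU) => b [hb|hb] //.
    by move: hb; rewrite e.
have invB : forall x, Inv (Bx x) by move=> x; apply: union_inv => y _; exact: invC.
pose F := fun a => exists y, out y = Some a.
have invF : Inv F.
  have := union_inv (fun _ => True) (fun y _ => invC y).
  move=> h U hU; apply: h; apply: (IG_mono _ hU) => b [y hy]; by exists y.
have BF : forall x b, Bx x b -> F b by move=> x b [y [_ hy]]; exists y.
have cntB : forall x, exists h : nat -> nset, (forall i, Bx x (h i) \/ forall z, ~ h i z) /\
    (forall b, Bx x b -> exists i, h i = b).
  move=> x; have [g hg] := cnt x.
  exists (fun i => match pselect (lt (g i) x) with
          | left _ => (match out (g i) with Some a => a | None => fun _ => False end)
          | right _ => fun _ => False end); split.
  - move=> i; case: pselect => [hl|_]; last by right => z [].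
    case e: (out (g i)) => [a|]; last by right => z [].
    by left; exists (g i).
  - move=> b [y [hy e]]; have [i hi] := hg y hy; exists i; subst y.
    by case: pselect => [_|//]; rewrite e.
have hAD : AD F.
  split.
  - by move=> a [y /outG [ha _ _ _]].
  - move=> a b [x ex] [y ey] ne.
    have nxy : x <> y by move=> e; subst y; rewrite ex in ey; case: ey => /ne.
    case: (tot _ _ nxy) => hl.
    + have [_ had _ _] := outG _ _ ey; have [N hN] := had a (ex_intro _ x (conj hl ex)).
      by exists N => z [az bz]; apply: hN.
    + have [_ had _ _] := outG _ _ ex; exact: had b (ex_intro _ y (conj hl ey)).
exists F; split; first split; first split => //.
-
  move=> G [Ginf GAD] FG b Gb; apply: NNPP => nFb.
  pose xb := enc False b.
  have [h [hh1 hh2]] := cntB xb.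
  have [a [ainf aad ainv asub]] := X_step hh1 hh2 (invB xb) (Ginf b Gb)
    (fun c hc => GAD b c Gb (FG c (BF _ _ hc)) (fun e => nFb (eq_ind_r F (BF _ _ hc) e))).
  have [a' [ea' [a'inf _ _ a'sub]]] : exists a', out xb = Some a' /\ Good (Bx xb) xb a'.
    apply: outEx; exists a; split => //; by rewrite (@ifF (xb 0) _ _ id).
  have {}a'sub : forall y, a' y -> b y.
    by move: a'sub; rewrite (@ifF (xb 0) _ _ id).
  have Fa' : F a' by exists xb.
  have ne : a' <> b by move=> e; apply: nFb; rewrite -e.
  have [N hN] := GAD a' b (FG _ Fa') Gb ne.
  by apply: a'inf; exists N => z az; apply: hN; split => //; apply: a'sub.
-
  move=> [f hf].
  pose xf := enc True (graph f).
  have [h [hh1 hh2]] := cntB xf.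
  have rel : forall A, ideal_gen (Bx xf) A -> Zideal (fun i => A (f i)).
    move=> A hA; apply: hf; apply: (IG_mono _ hA); exact: BF.
  have [a [ainf aad ainv anz]] := f_step hh1 hh2 (invB xf) rel.
  have [a' [ea' [_ _ _ a'nz]]] : exists a', out xf = Some a' /\ Good (Bx xf) xf a'.
    have df : decode (tl xf) = f by exact: decode_graph.
    apply: outEx; exists a; split => //; rewrite (@ifT (xf 0) _ _ I).
    by rewrite df.
  have df : decode (tl xf) = f by exact: decode_graph.
  move: a'nz; rewrite (@ifT (xf 0) _ _ I) df.
  by apply; apply: hf; apply: IG_mem; exists xf.
-
  move=> hSS.
  have hpos : in_fin_pos (ideal_gen F) blk.
    move=> A hA; have [h1 _] := invF A hA; have [n [_ hn]] := h1 0.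
    by exists n.
  have [W [Winf hW]] := hSS blk blk_block hpos.
  have [_ h2] := invF _ hW; have [N hN] := h2 1.
  have [n [hn Wn]] : exists n, N <= n /\ W n.
    apply: NNPP => hno; apply: Winf; exists N => n Wn.
    case: (ltnP n N) => // hle; by case: hno; exists n.
  have [t [_ st ht]] := hN n hn.
  case: t st ht => [//|x t] _ /(_ x (mem_head _ _)) [hx nx].
  by apply: nx; exists n.
Qed.

Theorem mainTheorem17 :
  CH -> exists F : nfamily, Z_MAD F /\ ~ shelah_steprans_block F.
Proof.
move=> hCH; have [lt [wf [tr [tot [irr cnt]]]]] := good_order hCH.
exact: construction wf tr tot irr cnt.
Qed.
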